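(* Suppose the LP decoder, on received word $y\in\Sigma^n$, outputs a codeword $c\in\mathcal C$ (i.e. the minimizer $(f,w)$ it computes has $f=\Xi(c)\in\{0,1\}^{(q-1)n}$). Then $c$ is a maximum-likelihood codeword: $p(y\mid c)\ge p(y\mid c')$ for all $c'\in\mathcal C$, where $p(y\mid c)=\prod_{i=1}^n p(y_i\mid c_i)$.
   Context: Let $R$ be a finite ring with $q$ elements and additive identity $0$; $R^-=R\setminus\{0\}$. Let $\mathcal H$ be an $m\times n$ matrix over $R$, $\mathcal C=\{c\in R^n:c\mathcal H^T=0\}$, $\mathcal I=\{1,\dots,n\}$, $\mathcal J=\{1,\dots,m\}$, $\mathcal I_j=\{i:\mathcal H_{j,i}\ne0\}$, $\mathcal C_j=\{b\in R^{\mathcal I_j}:\sum_{i\in\mathcal I_j}b_i\mathcal H_{j,i}=0\}$. Let $\xi:R\to\{0,1\}^{q-1}$ (coordinates indexed by $R^-$), $\xi(a)^{(\gamma)}=1$ iff $\gamma=a$; $\Xi(c)=(\xi(c_1)\mid\cdots\mid\xi(c_n))$, with coordinates $f_i^{(\alpha)}$ for $f\in\mathbb R^{(q-1)n}$. The polytope $\mathcal Q$ is the set of $(f,w)$, $w=(w_{j,b})_{j\in\mathcal J,b\in\mathcal C_j}$, with $w_{j,b}\ge0$, $\sum_{b\in\mathcal C_j}w_{j,b}=1$ for each $j$, and $f_i^{(\alpha)}=\sum_{b\in\mathcal C_j,b_i=\alpha}w_{j,b}$ for all $j$, $i\in\mathcal I_j$, $\alpha\in R^-$. Channel: memoryless with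 input alphabet $R$, output alphabet $\Sigma$ (finite, or $\mathbb R^l$ or $\mathbb C^l$), transition probability (density) $p(y\mid a)$. For $y\in\Sigma$ and $\alpha\in R^-$, $\lambda^{(\alpha)}(y)=\log\big(p(y\mid0)/p(y\mid\alpha)\big)$, and for $y\in\Sigma^n$, $\Lambda(y)$ is the vector with coordinates $\lambda^{(\alpha)}(y_i)$. The LP decoder computes a minimizer $(f,w)$ of $\Lambda(y)f^T=\sum_{i,\alpha}\lambda^{(\alpha)}(y_i)f_i^{(\alpha)}$ over $\mathcal Q$; if $f\in\{0,1\}^{(q-1)n}$ it outputs $\Xi^{-1}(f)$, otherwise it declares a decoding failure. *)

(* Defs.v *)
From HB Require Import structures.
From mathcomp Require Import all_boot all_order all_algebra.
From mathcomp Require Import reals exp.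
Set Implicit Arguments. Unset Strict Implicit. Unset Printing Implicit Defensive.
Import Order.TTheory GRing.Theory Num.Theory.
Local Open Scope ring_scope.

Section LPDecoding.
Variables (Rg : finPzRingType) (m n : nat) (H : 'M[Rg]_(m, n)).

Definition codeword (c : 'rV[Rg]_n) : Prop := c *m H^T = 0.

(* Local code C_j.  A vector b in R^{I_j} is encoded as a function
   'I_n -> Rg vanishing outside I_j = { i | H j i != 0 } (a bijection). *)
Definition local_codeword (j : 'I_m) (b : {ffun 'I_n -> Rg}) : bool :=
  [forall i, (H j i == 0) ==> (b i == 0)] && (\sum_(i < n) b i * H j i == 0).

Variable (R : realType).

(* The polytope Q : f is indexed by (i, alpha) with alpha in R^- (values of
   f at alpha = 0 are meaningless and unconstrained); w is indexed by
   j in J and b in C_j (values of w outside C_j are meaningless). *)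
Definition in_Q (f : 'I_n -> Rg -> R) (w : 'I_m -> {ffun 'I_n -> Rg} -> R) : Prop :=
  [/\ forall j b, local_codeword j b -> 0 <= w j b,
      forall j, \sum_(b | local_codeword j b) w j b = 1
    & forall j i alpha, H j i != 0 -> alpha != 0 ->
        f i alpha = \sum_(b | local_codeword j b && (b i == alpha)) w j b].

Definition Xi (c : 'rV[Rg]_n) (i : 'I_n) (alpha : Rg) : R :=
  if c 0 i == alpha then 1 else 0.

Variables (Sigma : Type) (p : Sigma -> Rg -> R).

Definition llr (u : Sigma) (alpha : Rg) : R := ln (p u 0 / p u alpha).

Definition lp_cost (y : 'I_n -> Sigma) (f : 'I_n -> Rg -> R) : R :=
  \sum_(i < n) \sum_(alpha | alpha != 0) llr (y i) alpha * f i alpha.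

Definition LP_minimizer (y : 'I_n -> Sigma) f w : Prop :=
  in_Q f w /\ forall f' w', in_Q f' w' -> lp_cost y f <= lp_cost y f'.

Definition likelihood (y : 'I_n -> Sigma) (c : 'rV[Rg]_n) : R :=
  \prod_(i < n) p (y i) (c 0 i).

End LPDecoding.

(* Main.v *)
Require Import Defs.
From HB Require Import structures.
From mathcomp Require Import all_boot all_order all_algebra.
From mathcomp Require Import reals exp.
Import Order.TTheory GRing.Theory Num.Theory.
Local Open Scope ring_scope.

Lemma ln_prod_seq (R : realType) (I : Type) (s : seq I) (g : I -> R) :
  (forall i, 0 < g i) -> ln (\prod_(i <- s) g i) = \sum_(i <- s) ln (g i).
Proof.
move=> hg; elim: s => [|a s IH]; first by rewrite !big_nil ln1.
rewrite !big_cons lnM ?IH // posrE //.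
by apply: prodr_gt0 => i _.
Qed.

Lemma cost_Xi (Rg : finPzRingType) (n : nat) (R : realType) (Sigma : Type)
  (p : Sigma -> Rg -> R) (y : 'I_n -> Sigma) (c : 'rV[Rg]_n) :
  (forall (i : 'I_n) (a : Rg), 0 < p (y i) a) ->
  lp_cost p y (Xi R c) = \sum_(i < n) (ln (p (y i) 0) - ln (p (y i) (c 0 i))).
Proof.
move=> hp; apply: eq_bigr => i _.
have llrE a : llr p (y i) a = ln (p (y i) 0) - ln (p (y i) a).
  by rewrite /llr ln_div // posrE.
case: (eqVneq (c 0 i) 0) => hc.
  rewrite hc subrr big1 // => a ha; rewrite /Xi hc eq_sym (negbTE ha) mulr0 //.
rewrite (bigD1 (c 0 i)) //= big1 ?addr0.
  by rewrite /Xi eqxx mulr1 llrE.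
move=> a /andP[_ ha]; by rewrite /Xi eq_sym (negbTE ha) mulr0.
Qed.

Theorem proposition2 (Rg : finPzRingType) (m n : nat) (H : 'M[Rg]_(m, n))
    (R : realType) (Sigma : Type) (p : Sigma -> Rg -> R)
    (y : 'I_n -> Sigma)
    (hp : forall (i : 'I_n) (a : Rg), 0 < p (y i) a)
    (f : 'I_n -> Rg -> R) (w : 'I_m -> {ffun 'I_n -> Rg} -> R)
    (c : 'rV[Rg]_n) :
  codeword H c ->
  LP_minimizer H p y f w ->
  (forall (i : 'I_n) (alpha : Rg), alpha != 0 -> f i alpha = Xi R c i alpha) ->
  forall c' : 'rV[Rg]_n, codeword H c' -> likelihood p y c' <= likelihood p y c.
Proof.
move=> _ [_ hmin] hf c' hc'.
pose bj (j : 'I_m) : {ffun 'I_n -> Rg} :=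
  [ffun i => if H j i == 0 then 0 else c' 0 i].
have hloc j : local_codeword H j (bj j).
  apply/andP; split.
    by apply/forallP => i; apply/implyP => hji; rewrite ffunE hji.
  apply/eqP; move: hc'; rewrite /codeword => /matrixP /(_ 0 j); rewrite !mxE => hs.
  rewrite -[RHS]hs; apply: eq_bigr => i _; rewrite ffunE !mxE.
  by case: (eqVneq (H j i) 0) => h; rewrite ?h ?mulr0.
pose w' j (b : {ffun 'I_n -> Rg}) : R := if b == bj j then 1 else 0.
have hQ : in_Q H (Xi R c') w'.
  split.
  - by move=> j b _; rewrite /w'; case: ifP.
  - move=> j; rewrite (bigD1 (bj j)) //= /w' eqxx big1 ?addr0 //.
    by move=> b /andP[_ /negbTE ->].
  - move=> j i a hji ha.
    case: (eqVneq (bj j i) a) => hb.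
      rewrite (bigD1 (bj j)) /=; last by rewrite hloc hb eqxx.
      rewrite /w' eqxx big1 ?addr0.
        by rewrite /Xi -hb ffunE (negbTE hji) eqxx.
      by move=> b /andP[_ /negbTE ->].
    rewrite big1; last first.
      move=> b /andP[hb1 hne]; have /eqP hbi : b i == a by case/andP: hb1.
      rewrite /w'.
      case: eqP => // hbb; case/eqP: hb; by rewrite -hbb.
    by rewrite /Xi; move: hb; rewrite ffunE (negbTE hji) => /negbTE ->.
have hle := hmin _ _ hQ.
have hfc : lp_cost p y f = lp_cost p y (Xi R c).
  apply: eq_bigr => i _; apply: eq_bigr => a ha; by rewrite hf.
rewrite hfc !cost_Xi // in hle.
have pos (d : 'rV[Rg]_n) : 0 < likelihood p y d.
  by apply: prodr_gt0 => i _.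
rewrite -ler_ln ?posrE ?pos // /likelihood !ln_prod_seq //.
move: hle; rewrite !sumrB lerD2l lerN2 //.
Qed.
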